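(* Let $\mathbf{F}$ be a $\pi$-tree on a topological space $X$ and let $\alpha:\omega\to\omega$ be strictly increasing. Then there is a $\pi$-tree $\mathbf{H}$ on $X$ such that $\alpha[\mathrm{rise}_{\mathbf{F}}(p,U)]\subseteq\mathrm{rise}_{\mathbf{H}}(p,U)$ for all $p\in X$ and all neighbourhoods $U$ of $p$ in $X$.
   Context: Neighbourhoods are not necessarily open. $\omega=\{0,1,2,\dots\}$, ${}^{<\omega}\omega$ is the set of finite sequences of natural numbers. A tree is a strict partial order in which the set of predecessors of every node is well-ordered; $\mathrm{height}(x)$ is the ordinal isomorphic to the set of predecessors of $x$; a branch is a maximal chain; $\mathrm{sons}(x)$ is the set of immediate successors of $x$; $0$ denotes the least node. A foliage tree is a pair $\mathbf{F}=(T,l)$ with $T$ a tree (skeleton) and $l$ a function on its nodes, $\mathbf{F}_x:=l(x)$; tree notions apply via the skeleton. $\mathrm{shoot}_{\mathbf{F}}(v)=\{\bigcup_{x\in C}\mathbf{F}_x: C\text{ a cofinite subset of }\mathrm{sons}_{\mathbf{F}}(v)\}$; $\mathrm{scope}_{\mathbf{F}}(p)=\{x:p\in\mathbf{F}_x\}$. For families $\gamma,\delta$ of sets, $\gamma\gg\delta$ means every nonempty $D\in\delta$ contains some nonempty $G\in\gamma$. $\mathrm{rise}_{\mathbf{F}}(p,U)=\{\mathrm{height}_{\mathbf{F}}(v): v\in\mathrm{scope}_{\mathbf{F}}(p),\ \mathrm{shoot}_{\mathbf{F}}(v)\gg\{U\}\}$. $\mathbf{F}$ is locally strict if each non-maximal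 leaf $\mathbf{F}_x$ is the disjoint union of $\mathbf{F}_s$, $s\in\mathrm{sons}(x)$; has strict branches if it has a node and for each branch $B$, $\bigcap_{x\in B}\mathbf{F}_x$ is a singleton; is open in $X$ if all leaves are open in $X$; is a foliage $\omega,\omega$-tree if its skeleton is order-isomorphic to $({}^{<\omega}\omega,\subsetneq)$. A Baire foliage tree on $X$ is an open in $X$, locally strict foliage $\omega,\omega$-tree with strict branches and $\mathbf{F}_{0_{\mathbf{F}}}=X$. $\mathbf{F}$ grows into $X$ if for every $p\in X$ and neighbourhood $U$ of $p$ there is $z\in\mathrm{scope}_{\mathbf{F}}(p)$ with $\mathrm{shoot}_{\mathbf{F}}(z)\gg\{U\}$. A $\pi$-tree on $X$ is a Baire foliage tree on $X$ that grows into $X$. *)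

(* Defs.v *)
From HB Require Import structures.
From mathcomp Require Import all_boot all_order.
From mathcomp Require Import all_classical all_reals topology.
Set Implicit Arguments. Unset Strict Implicit. Unset Printing Implicit Defensive.
Local Open Scope classical_set_scope.

(* Skeleton: the tree ({}^{<omega}omega, strict initial segment). *)
Definition node := seq nat.
Definition tlt (s t : node) : Prop := prefix s t /\ s <> t.
Definition sons (v : node) : set node := [set rcons v n | n in [set: nat]].
Definition root : node := [::].
(* height of a node = ordinal type of its set of predecessors = its length *)
Definition height (v : node) : nat := size v.

Definition is_chain (B : set node) : Prop :=
  forall x y, B x -> B y -> x = y \/ tlt x y \/ tlt y x.
Definition is_branch (B : set node) : Prop :=
  is_chain B /\ forall B', is_chain B' -> B `<=` B' -> B' = B.

Definition foliage (X : Type) := node -> set X.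

Section Foliage.
Context {X : topologicalType}.
Implicit Types (F : foliage X) (p : X) (U : set X) (v : node).

Definition shoot F v : set (set X) :=
  [set S | exists C : set node, [/\ C `<=` sons v,
     finite_set (sons v `\` C) & S = \bigcup_(x in C) F x]].

Definition scope F p : set node := [set x | F x p].

Definition gg (gamma delta : set (set X)) : Prop :=
  forall D, delta D -> D !=set0 -> exists2 G, gamma G & G !=set0 /\ G `<=` D.

Definition rise F p U : set nat :=
  [set height v | v in [set v | scope F p v /\ gg (shoot F v) [set U]]].

Definition locally_strict F : Prop :=
  forall x, F x = \bigcup_(s in sons x) F s /\
    (forall s t, sons x s -> sons x t -> s <> t -> F s `&` F t = set0).

Definition strict_branches F : Prop :=
  (exists x : node, True) /\
  forall B, is_branch B -> exists p, \bigcap_(x in B) F x = [set p].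

Definition open_foliage F : Prop := forall x, open (F x).

Definition baire_foliage_tree F : Prop :=
  [/\ open_foliage F, locally_strict F, strict_branches F & F root = setT].

Definition grows_into F : Prop :=
  forall p U, nbhs p U -> exists2 z, scope F p z & gg (shoot F z) [set U].

Definition pi_tree F : Prop := baire_foliage_tree F /\ grows_into F.
End Foliage.

(* Main.v *)
Require Import Defs.
Set Implicit Arguments. Unset Strict Implicit.
From Stdlib Require Cantor.
From mathcomp Require Import all_boot all_order.
From mathcomp Require Import all_classical all_reals topology.
Local Open Scope classical_set_scope.
Lemma prefix_cmp (a b c : node) : prefix a c -> prefix b c -> prefix a b \/ prefix b a.
Proof.
rewrite prefixE => /eqP ha; rewrite prefixE => /eqP hb.
case: (leqP (size a) (size b)) => h.
  left; rewrite prefixE; apply/eqP.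
  by rewrite -[in RHS]ha -[in X in take _ X]hb take_takel.
right; rewrite prefixE; apply/eqP.
by rewrite -[in RHS]hb -[in X in take _ X]ha take_takel // ltnW.
Qed.

Lemma prefix_tlt (a b : node) : prefix a b -> a = b \/ tlt a b.
Proof. by move=> h; case: (eqVneq a b) => [->|ne]; [left|right; split=> //; apply/eqP]. Qed.

Lemma tlt_size a b : tlt a b -> size a < size b.
Proof.
case=> h ne; rewrite ltn_neqAle size_prefix // andbT.
apply/negP => /eqP e; apply: ne; move: h; rewrite prefixE e take_size => /eqP //.
Qed.

Lemma chain_prefix (a b c : node) : prefix a c -> prefix b c -> a = b \/ tlt a b \/ tlt b a.
Proof.
move=> ha hb; case: (prefix_cmp ha hb) => h; case: (prefix_tlt h) => [->|]; auto.
Qed.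

Lemma branch_of (v : nat -> node) : (forall n m, n <= m -> prefix (v n) (v m)) ->
  (forall N, exists n, N <= size (v n)) -> is_branch [set u | exists n, prefix u (v n)].
Proof.
move=> mono unb; split.
  move=> x y [n hx] [m hy]; case: (leqP n m) => nm.
    exact: (chain_prefix (prefix_trans hx (mono _ _ nm)) hy).
  exact: (chain_prefix hx (prefix_trans hy (mono _ _ (ltnW nm)))).
move=> B' chB' sub; apply/seteqP; split => // y By.
have [n hn] := unb (size y).
have Bv : B' (v n) by apply: sub; exists n; exact: prefix_refl.
case: (chB' _ _ By Bv) => [->|[[h _]|h]]; first by exists n; exact: prefix_refl.
  by exists n.
have := tlt_size h; rewrite ltnNge hn //.
Qed.

Lemma branch_seq (B : set node) : is_branch B -> exists x : nat -> node,
  [/\ (forall n, B (x n)), (forall n, size (x n) = n),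
      (forall n, exists a, x n.+1 = rcons (x n) a) & (forall y, B y -> y = x (size y))].
Proof.
move=> [ch mx].
have pcl : forall y u, B y -> prefix u y -> B u.
  move=> y u By uy.
  have ch' : is_chain (B `|` [set u]).
    move=> a b [Ba|->] [Bb|->]; [exact: ch| |  |by left].
    - case: (ch _ _ Ba By) => [->|[[h _]|[h _]]].
      + exact: chain_prefix (prefix_refl y) uy.
      + exact: chain_prefix h uy.
      + exact: chain_prefix (prefix_refl a) (prefix_trans uy h).
    - case: (ch _ _ Bb By) => [->|[[h _]|[h _]]].
      + exact: chain_prefix uy (prefix_refl y).
      + exact: chain_prefix uy h.
      + exact: chain_prefix (prefix_trans uy h) (prefix_refl b).
  have := mx _ ch' (fun z h => or_introl h).
  by move=> e; rewrite -e; right.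
have uniq_sz : forall a b, B a -> B b -> size a = size b -> a = b.
  move=> a b Ba Bb e; case: (ch _ _ Ba Bb) => [//|[h|h]].
    by have := tlt_size h; rewrite e ltnn.
  by have := tlt_size h; rewrite e ltnn.
have big : forall N, exists y, B y /\ N <= size y.
  elim=> [|N [y [By hy]]].
    have ch' : is_chain (B `|` [set [::]]).
      move=> a b [Ba|->] [Bb|->]; [exact: ch| | |by left].
      - exact: chain_prefix (prefix_refl a) (prefix0s a).
      - exact: chain_prefix (prefix0s b) (prefix_refl b).
    have := mx _ ch' (fun z h => or_introl h).
    by move=> e; exists [::]; split => //; rewrite -e; right.
  case: (leqP (size y) N) => hN; last by exists y.
  apply: contrapT => nex.
  have all_pre : forall z, B z -> prefix z y.
    move=> z Bz; case: (ch _ _ Bz By) => [->|[[h _]|h]]; first exact: prefix_refl.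
      by [].
    have := tlt_size h => lt; apply: False_ind; apply: nex; exists z; split => //.
    by rewrite (leq_trans _ lt) // ltnS.
  have ch' : is_chain (B `|` [set rcons y 0]).
    move=> a b [Ba|->] [Bb|->]; [exact: ch| | |by left].
    - exact: chain_prefix (prefix_trans (all_pre _ Ba) (prefix_rcons _ _)) (prefix_refl _).
    - exact: chain_prefix (prefix_refl _) (prefix_trans (all_pre _ Bb) (prefix_rcons _ _)).
  have := mx _ ch' (fun z h => or_introl h).
  move=> e; apply: nex; exists (rcons y 0); split; first by rewrite -e; right.
  by rewrite size_rcons ltnS (leq_trans hy) // (eqP hN).
have ex : forall n, exists y, B y /\ size y = n.
  move=> n; have [y [By hy]] := big n; exists (take n y); split.
    exact: pcl By (prefix_take _ _).
  by rewrite size_take_min; apply/minn_idPl.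
pose x n := proj1_sig (cid (ex n)).
have xB n : B (x n) by rewrite /x; case: cid => ? [].
have xs n : size (x n) = n by rewrite /x; case: cid => ? [].
exists x; split => //.
  move=> n; exists (nth 0 (x n.+1) n).
  have e : x n = take n (x n.+1).
    apply: uniq_sz => //; first exact: pcl (xB n.+1) (prefix_take _ _).
    by rewrite xs size_take xs ltnSn.
  by rewrite e -take_nth ?xs // take_oversize // xs.
by move=> y By; apply: uniq_sz => //; rewrite xs.
Qed.

Definition pairn (i j : nat) : nat := Cantor.to_nat (i, j).
Lemma pairn_inj i j i' j' : pairn i j = pairn i' j' -> i = i' /\ j = j'.
Proof. by move=> /(congr1 Cantor.of_nat); rewrite !Cantor.cancel_of_to => -[]. Qed.
Lemma pairn_surj k : exists i j, k = pairn i j.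
Proof.
case E: (Cantor.of_nat k) => [i j]; exists i, j.
by rewrite /pairn -E Cantor.cancel_to_of.
Qed.

Section Constr.
Variable X : topologicalType.
Variable F : foliage X.
Variable alpha : nat -> nat.
Hypothesis FB : baire_foliage_tree F.
Hypothesis amono : forall m n, (m < n)%N -> (alpha m < alpha n)%N.

Lemma Fls : locally_strict F. Proof. by case: FB. Qed.

Lemma Fcover v : F v = \bigcup_(k in setT) F (rcons v k).
Proof. by rewrite {1}(proj1 (Fls v)) /sons bigcup_image. Qed.

Lemma Fsub v a : F (rcons v a) `<=` F v.
Proof. by move=> x Fx; rewrite Fcover; exists a. Qed.

Lemma Fdisj v a b : a <> b -> F (rcons v a) `&` F (rcons v b) = set0.
Proof.
move=> ne; apply: (proj2 (Fls v)); [by exists a|by exists b|].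
by move=> /rcons_inj [].
Qed.

Lemma Fcat u s : F (u ++ s) `<=` F u.
Proof.
elim/last_ind: s => [|s a IH]; first by rewrite cats0.
by rewrite -rcons_cat => x /Fsub /IH.
Qed.

Lemma Fpre u u' : prefix u u' -> F u' `<=` F u.
Proof. by move=> /prefixP [s ->]; exact: Fcat. Qed.

Lemma Fne u : F u !=set0.
Proof.
case: FB => _ _ [_ sb] _.
have br := @branch_of (fun n => u ++ nseq n 0).
have [||p hp] := sb _ (br _ _).
- move=> n m nm; apply/prefixP; exists (nseq (m - n) 0).
  by rewrite -catA -nseqD subnKC.
- by move=> N; exists N; rewrite size_cat size_nseq leq_addl.
exists p; have : (\bigcap_(x in [set u0 | exists n, prefix u0 (u ++ nseq n 0)]) F x) p.
  by rewrite hp.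
by apply; exists 0; rewrite cats0 prefix_refl.
Qed.


Definition stT := (nat * node * (nat -> nat))%type.
Definition step (s : stT) (i : nat) : stT :=
  let: (h, v, e) := s in
  if h == alpha (size v) then (h.+1, rcons v (e i), id)
  else (h.+1, v, fun j => e (pairn i j)).
Definition st (w : node) : stT := foldl step (0, [::], id) w.
Definition Hf : foliage X :=
  fun w => \bigcup_(k in setT) F (rcons (st w).1.2 ((st w).2 k)).

Lemma st_rcons w i : st (rcons w i) = step (st w) i.
Proof. by rewrite /st foldl_rcons. Qed.

Lemma st_inv w : let: (h, v, e) := st w in
  [/\ h = size w, h <= alpha (size v) & injective e].
Proof.
elim/last_ind: w => [|w i]; first by rewrite /st /=; split.
rewrite st_rcons /step; case: (st w) => [[h v] e] [-> hle einj].
case: eqP => [eq|ne]; split; rewrite ?size_rcons //.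
- by rewrite eq; exact: amono.
- by rewrite ltn_neqAle hle andbT; apply/eqP.
- by move=> a b /einj /pairn_inj [].
Qed.

Lemma Hf_st w v e h : st w = (h, v, e) -> Hf w = \bigcup_(k in setT) F (rcons v (e k)).
Proof. by rewrite /Hf => ->. Qed.

Lemma Hf_desc w v e h i : st w = (h, v, e) -> h = alpha (size v) ->
  Hf (rcons w i) = F (rcons v (e i)).
Proof.
move=> E hE; rewrite /Hf st_rcons E /step hE eqxx /=.
by rewrite [in RHS]Fcover.
Qed.

Lemma Hf_split w v e h i : st w = (h, v, e) -> h <> alpha (size v) ->
  Hf (rcons w i) = \bigcup_(k in setT) F (rcons v (e (pairn i k))).
Proof.
move=> E hE; rewrite /Hf st_rcons E /step.
by case: eqP.
Qed.

Lemma Hls : locally_strict Hf.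
Proof.
move=> w; case E: (st w) => [[h v] e].
have := st_inv w; rewrite E => -[_ _ einj].
rewrite /sons bigcup_image (Hf_st E).
case: (eqVneq h (alpha (size v))) => [hE|hE].
  split.
    apply/seteqP; split => x [k _ Fx]; exists k => //.
      by rewrite (Hf_desc _ E hE).
    by move: Fx; rewrite (Hf_desc _ E hE).
  move=> s t [i _ <-] [j _ <-] ne; rewrite !(Hf_desc _ E hE).
  apply: Fdisj => /einj eij; apply: ne; by rewrite eij.
have hE' : h <> alpha (size v) by apply/eqP.
split.
  apply/seteqP; split => x.
    case=> k _; have [i [j ->]] := pairn_surj k => Fx.
    by exists i => //; rewrite (Hf_split _ E hE'); exists j.
  by case=> i _; rewrite (Hf_split _ E hE') => -[j _ Fx]; exists (pairn i j).
move=> s t [i _ <-] [j _ <-] ne; rewrite !(Hf_split _ E hE').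
apply/seteqP; split => // x [[k _ Fx] [l _ Fy]].
case: (eqVneq (e (pairn i k)) (e (pairn j l))) => [eq|neq].
  by move: eq => /einj /pairn_inj [eij _]; apply: ne; rewrite eij.
have : (F (rcons v (e (pairn i k))) `&` F (rcons v (e (pairn j l)))) x by [].
by rewrite Fdisj //; apply/eqP.
Qed.

Lemma Hsub w i : Hf (rcons w i) `<=` Hf w.
Proof. by move=> x hx; rewrite (proj1 (Hls w)); exists (rcons w i) => //; exists i. Qed.

Lemma Hsub_F w v e h : st w = (h, v, e) -> Hf w `<=` F v.
Proof. by move=> E x; rewrite (Hf_st E) => -[k _]; apply: Fsub. Qed.

Lemma Hopen : open_foliage Hf.
Proof. by move=> w; apply: bigcup_open => k _; case: FB => op _ _ _; exact: op. Qed.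

Lemma Hroot : Hf Defs.root = setT.
Proof. by rewrite (@Hf_st Defs.root [::] id 0) //; rewrite -Fcover; case: FB. Qed.

Definition stv w := (st w).1.2.

Lemma st_step w i :
  (size w = alpha (size (stv w)) /\ size (stv (rcons w i)) = (size (stv w)).+1 /\
     Hf (rcons w i) = F (stv (rcons w i)))
  \/ (size w < alpha (size (stv w)) /\ stv (rcons w i) = stv w).
Proof.
have := st_inv w; rewrite /stv.
case E: (st w) => [[h v] e] /= [hs hle _].
case: (eqVneq h (alpha (size v))) => [hE|hE].
  left; rewrite -hs; split => //.
  rewrite (Hf_desc _ E hE) st_rcons E /step hE eqxx /= size_rcons; split => //.
right; rewrite st_rcons E /step (negbTE hE) /= -hs; split => //.
by rewrite ltn_neqAle hE.
Qed.

Lemma stv_prefix w i : prefix (stv w) (stv (rcons w i)).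
Proof.
rewrite /stv st_rcons; case: (st w) => [[h v] e] /=.
by case: eqP => _ /=; [exact: prefix_rcons|exact: prefix_refl].
Qed.

Lemma Hsb : strict_branches Hf.
Proof.
split; first by exists [::].
move=> B /branch_seq [x [xB xs xS xall]].
have xrc n : exists a, x n.+1 = rcons (x n) a by exact: xS.
pose vx n := stv (x n).
have vmono n m : n <= m -> prefix (vx n) (vx m).
  move=> /subnK <-; elim: (m - n) => [|k IH]; first exact: prefix_refl.
  apply: prefix_trans IH _; rewrite addSn /vx; have [a ->] := xrc (k + n).
  exact: stv_prefix.
have desc : forall n, exists m, n <= m /\ size (vx m.+1) = (size (vx m)).+1 /\
    Hf (x m.+1) = F (vx m.+1).
  move=> n; move: {2}(alpha (size (vx n)) - n) (erefl (alpha (size (vx n)) - n)) => k.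
  elim: k n => [|k IH] n hk.
    have [a xa] := xrc n; have := st_step (x n) a; rewrite -xa xs.
    case=> [[e1 [e2 e3]]|[lt _]]; first by exists n.
    by move: hk; rewrite /vx; move/eqP; rewrite subn_eq0 leqNgt lt.
  have [a xa] := xrc n; have := st_step (x n) a; rewrite -xa xs.
  case=> [[e1 [e2 e3]]|[lt e]]; first by exists n.
  have hk' : alpha (size (vx n.+1)) - n.+1 = k by rewrite /vx e subnS -/(vx n) hk.
  have [m [nm hm]] := IH n.+1 hk'; exists m; split => //; exact: ltnW.
have unb : forall N, exists n, N <= size (vx n).
  elim=> [|N [n hn]]; first by exists 0.
  have [m [nm [hs _]]] := desc n; exists m.+1; rewrite hs ltnS.
  exact: leq_trans hn (size_prefix (vmono _ _ nm)).
case: FB => _ _ [_ sb] _.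
have [p hp] := sb _ (branch_of vmono unb).
have pin : forall u, (exists n, prefix u (vx n)) -> F u p.
  by move=> u hu; have : (\bigcap_(x in [set u | exists n, prefix u (vx n)]) F x) p;
    [rewrite hp | apply].
exists p; apply/seteqP; split => q.
  move=> hq; rewrite -hp => u [n hu]; apply: (Fpre hu).
  have := hq (x n) (xB n); rewrite /vx /stv.
  by case E: (st (x n)) => [[h v] e] /= hx; exact: (Hsub_F E).
move=> -> y By; rewrite (xall _ By).
have [m [nm [_ hm]]] := desc (size y).
have : Hf (x m.+1) p by rewrite hm; apply: pin; exists m.+1; exact: prefix_refl.
have : forall k, Hf (x (size y + k)) `<=` Hf (x (size y)).
  elim=> [|k IH]; first by rewrite addn0.
  by rewrite addnS; have [a ->] := xrc (size y + k); move=> z /Hsub /IH.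
by move=> H; rewrite -(subnKC (leq_trans nm (leqnSn m))) => /H.
Qed.

Lemma walk1 k w p : alpha (size (stv w)) - size w = k -> Hf w p ->
  exists w', [/\ stv w' = stv w, size w' = alpha (size (stv w)) & Hf w' p].
Proof.
elim: k w => [|k IH] w hk hp.
  have [a _] := (pairn_surj 0).
  case: (st_step w a) => [[e1 _]|[lt _]]; first by exists w.
  by move: hk => /eqP; rewrite subn_eq0 leqNgt lt.
have : (\bigcup_(s in sons w) Hf s) p by rewrite -(proj1 (Hls w)).
case=> _ [i _ <-] hpi.
case: (st_step w i) => [[e1 _]|[lt e]]; first by exists w.
have hk' : alpha (size (stv (rcons w i))) - size (rcons w i) = k.
  by rewrite e size_rcons subnS hk.
have [w' [e' s' h']] := IH _ hk' hpi.
by exists w'; rewrite -e; split.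
Qed.

Lemma walk2 z p : F z p ->
  exists w, [/\ stv w = z, size w = alpha (size z) & Hf w p].
Proof.
elim/last_ind: z p => [|z m IH] p hp.
  have := @walk1 _ [::] p erefl; rewrite Hroot => /(_ I) [w [e1 e2 e3]].
  by exists w.
have [w [e1 e2 e3]] := IH p (Fsub hp).
have : (\bigcup_(s in sons w) Hf s) p by rewrite -(proj1 (Hls w)).
case=> _ [i _ <-] hpi.
have := st_inv w; rewrite /stv in e1.
case E: (st w) e1 => [[h v] e] /= ev [hs _ _]; subst v.
have hE : h = alpha (size z) by rewrite hs.
move: hpi; rewrite (Hf_desc _ E hE) => hpi.
have ei : e i = m.
  apply: contrapT => ne; have : (F (rcons z (e i)) `&` F (rcons z m)) p by [].
  by rewrite Fdisj.
have sv : stv (rcons w i) = rcons z m by rewrite /stv st_rcons E /step hE eqxx /= ei.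
have := @walk1 _ (rcons w i) p erefl.
rewrite (Hf_desc _ E hE) ei => /(_ hp) [w' [e1' e2' e3']].
by exists w'; rewrite e1' sv; split => //; rewrite e2' sv.
Qed.

Lemma transfer z p U : F z p -> gg (shoot F z) [set U] ->
  exists w, [/\ size w = alpha (size z), Hf w p & gg (shoot Hf w) [set U]].
Proof.
move=> hp hg; have [w [e1 e2 e3]] := walk2 hp.
exists w; split => //.
have := st_inv w; rewrite /stv in e1.
case E: (st w) e1 => [[h v] e] /= ev [hs _ einj]; subst v.
have hE : h = alpha (size z) by rewrite hs.
move=> D -> Une.
have [G [C [Csub Cfin ->]] [Gne GU]] := hg U erefl Une.
pose f i := rcons z (e i).
pose I := [set i | C (f i)].
have finI : finite_set (f @^-1` (sons z `\` C)).
  apply: finite_preimage Cfin => a b _ _ /rcons_inj [] /einj //.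
have [i Ii] : exists i, I i.
  apply: contrapT => nex; apply: infinite_nat; apply: sub_finite_set finI.
  move=> i _; split; first by exists (e i).
  by move=> Ci; apply: nex; exists i.
exists (\bigcup_(x in rcons w @` I) Hf x); last split.
- exists (rcons w @` I); split => //.
  + by move=> _ [j _ <-]; exists j.
  + apply: sub_finite_set (finite_image (rcons w) finI).
    move=> _ [[j _ <-] nC]; exists j => //; split; first by exists (e j).
    by move=> Cj; apply: nC; exists j.
- have [q hq] := Fne (f i); exists q; exists (rcons w i); first by exists i.
  by rewrite (Hf_desc _ E hE).
- move=> q [_ [j Ij <-]]; rewrite (Hf_desc _ E hE) => hq.
  by apply: GU; exists (f j).
Qed.
End Constr.
Unset Implicit Arguments.

Theorem lemma14 (X : topologicalType) (F : foliage X) (alpha : nat -> nat) :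
  pi_tree F ->
  (forall m n, (m < n)%N -> (alpha m < alpha n)%N) ->
  exists H : foliage X, pi_tree H /\
    forall (p : X) (U : set X), nbhs p U ->
      alpha @` rise F p U `<=` rise H p U.
Proof.
move=> [FB Fg] am.
exists (Hf F alpha); split.
  split; first by split; [exact: Hopen|exact: Hls|exact: Hsb|exact: Hroot].
  move=> p U nU; have [z zp zg] := Fg p U nU.
  have [w [_ wp wg]] := transfer FB am zp zg.
  by exists w.
move=> p U _ _ [_ [v [vp vg] <-] <-].
have [w [ws wp wg]] := transfer FB am vp vg.
by exists w.
Qed.
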